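(* Assume $\sigma_1(x)=\tfrac12\sigma_1''(0)(x-a_1)(x-b_1)$ with $\sigma_1''(0)\ne0$ and real $a_1,b_1$, and $\tau'(0)=-\frac{\frac12\sigma_1''(0)}{1-q^{-1}}$, so that $\sigma_2$ has degree one, $\sigma_2(x)=\sigma_2'(0)(x-a_2)$ with $\sigma_2'(0)\ne0$. Let $\Lambda_q:=a_1+b_1-\frac{(1-q^{-1})\tau(0)}{\frac12\sigma_1''(0)}$ and assume $a_1<0<b_1<a_2$ and $\Lambda_q<0$. Put $a=a_1$, $b=b_1$ and $$\rho(x)=\frac{(qx/a,\,qx/b;q)_\infty}{(x/a_2;q)_\infty}.$$ Then there exist polynomials $P_n$, $n\in\mathbb{N}_0$, with $P_n$ of degree $n$ a solution of the q-EHT with $\lambda=\lambda_n$, and nonzero constants $d_n^2$, such that for all $m,n\in\mathbb{N}_0$ $$\int_a^bP_n(x)P_m(x)\rho(x)\,d_qx=d_n^2\delta_{mn},$$ i.e. orthogonality with respect to $\rho$ supported on $\{q^ka\}_{k\in\mathbb{N}_0}\cup\{q^kb\}_{k\in\mathbb{N}_0}$.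
   Context: Throughout $0<q<1$. For a function $y$ and $\zeta\in\{q,q^{-1}\}$, $D_\zeta y(x)=\frac{y(x)-y(\zeta x)}{(1-\zeta)x}$ for $x\ne0$ and $D_\zeta y(0)=y'(0)$; $[n]_q=\frac{1-q^n}{1-q}$. Let $\sigma_1$ be a real polynomial of degree at most two, $\tau(x)=\tau'(0)x+\tau(0)$ a real polynomial with $\tau'(0)\ne0$, and $\sigma_2(x):=q[\sigma_1(x)+(1-q^{-1})x\tau(x)]$. The q-EHT with parameter $n$ is $\sigma_1(x)D_{q^{-1}}D_qy(x)+\tau(x)D_qy(x)+\lambda_ny(x)=0$, $\lambda_n=-[n]_q\big(\tau'(0)+\tfrac12[n-1]_{q^{-1}}\sigma_1''(0)\big)$. $(\beta;q)_\infty=\prod_{k\ge0}(1-\beta q^k)$, $(\beta_1,\dots,\beta_r;q)_\infty=\prod_i(\beta_i;q)_\infty$. For $a<0<b$, $\int_a^b f(x)\,d_qx=(1-q)b\sum_{j\ge0}q^jf(q^jb)+(1-q)(-a)\sum_{j\ge0}q^jf(q^ja)$. *)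

(* Defs.v *)
From HB Require Import structures.
From mathcomp Require Import all_boot all_order all_algebra.
From mathcomp Require Import all_classical all_reals all_analysis.
Set Implicit Arguments. Unset Strict Implicit. Unset Printing Implicit Defensive.
Import Order.TTheory GRing.Theory Num.Theory.
Import numFieldNormedType.Exports.
Local Open Scope ring_scope.

Section QDefs.
Variable R : realType.

Definition Dq (z : R) (y : R -> R) (x : R) : R :=
  if x == 0 then derive1 y 0 else (y x - y (z * x)) / ((1 - z) * x).

Definition qnum (q : R) (n : int) : R := (1 - q ^ n) / (1 - q).

Definition qpoch (q beta : R) : R :=
  limn (fun N : nat => \prod_(k < N) (1 - beta * q ^+ k)).

Definition qpsum (q c : R) (f : R -> R) (N : nat) : R :=
  \sum_(j < N) q ^+ j * f (q ^+ j * c).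

(* Jackson q-integral over [a,b], a < 0 < b *)
Definition qint (q a b : R) (f : R -> R) : R :=
  (1 - q) * b * limn (qpsum q b f) + (1 - q) * (- a) * limn (qpsum q a f).

Definition sigma2 (q : R) (s1 tau : {poly R}) : {poly R} :=
  q *: (s1 + (1 - q^-1) *: ('X * tau)).

Definition lambda_n (q : R) (s1 tau : {poly R}) (n : nat) : R :=
  - qnum q n%:Z * ((tau^`()).[0] + 2^-1 * qnum q^-1 (n%:Z - 1) * (s1^`(2)).[0]).

Definition solves_qEHT (q : R) (s1 tau : {poly R}) (n : nat) (P : {poly R}) : Prop :=
  forall x : R,
    s1.[x] * Dq q^-1 (Dq q (fun t => P.[t])) x + tau.[x] * Dq q (fun t => P.[t]) x
    + lambda_n q s1 tau n * P.[x] = 0.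

Definition rho (q a b a2 : R) (x : R) : R :=
  qpoch q (q * x / a) * qpoch q (q * x / b) / qpoch q (x / a2).

End QDefs.

(* Main.v *)
Require Import Defs.
From HB Require Import structures.
From mathcomp Require Import all_boot all_order all_algebra.
From mathcomp Require Import all_classical all_reals all_analysis.
From mathcomp.algebra_tactics Require Import ring lra.
From mathcomp Require Import zify.
Import Order.TTheory GRing.Theory Num.Theory.
Import numFieldNormedType.Exports.
Local Open Scope ring_scope.

Module Helpers.
Set Implicit Arguments. Unset Strict Implicit. Unset Printing Implicit Defensive.
Local Open Scope classical_set_scope.
Local Open Scope ring_scope.

Section QP.
Variable R : realType.

Definition pp (q be : R) (N : nat) : R := \prod_(k < N) (1 - be * q ^+ k).

Lemma geo_sum (z : R) N : (1 - z) * \sum_(k < N) z ^+ k = 1 - z ^+ N.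
Proof.
elim: N => [|N IH]; first by rewrite big_ord0 expr0 mulr0 subrr.
rewrite big_ord_recr /= mulrDr IH exprS; ring.
Qed.

Lemma geo_le (q : R) N : 0 <= q -> q < 1 -> \sum_(k < N) q ^+ k <= (1 - q)^-1.
Proof.
move=> q0 q1.
have h : 0 < 1 - q by rewrite subr_gt0.
rewrite -(ler_pM2l h) mulfV ?gt_eqF // geo_sum.
have := exprn_ge0 N q0; lra.
Qed.

Lemma expR_sumr (I : Type) (r : seq I) (F : I -> R) :
  expR (\sum_(i <- r) F i) = \prod_(i <- r) expR (F i).
Proof.
elim: r => [|i r IH]; first by rewrite !big_nil expR0.
by rewrite !big_cons expRD IH.
Qed.

Lemma fac_bounds (c0 y : R) : 0 <= c0 -> c0 < 1 -> y <= c0 ->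
  [/\ expR (- (`|y| / (1 - c0))) <= 1 - y, 1 - y <= expR `|y| & 0 < 1 - y].
Proof.
move=> c00 c01 yc.
have hc : 0 < 1 - c0 by rewrite subr_gt0.
split; last by lra.
- case/orP: (le_total y 0) => hy.
    apply: (@le_trans _ _ 1); last by lra.
    rewrite expR_le1 oppr_le0; apply: divr_ge0; [exact: normr_ge0|lra].
  rewrite ger0_norm //.
  set z := y / (1 - c0).
  have hz : 0 <= z by apply: divr_ge0; lra.
  have hzc : z * (1 - c0) = y by rewrite /z mulfVK ?gt_eqF.
  have E := expR_ge1Dx z.
  rewrite expRN -(ler_pM2r (expR_gt0 z)) mulVf ?gt_eqF ?expR_gt0 //.
  have h1 : 1 <= (1 - y) * (1 + z) by nra.
  apply: (le_trans h1); apply: ler_wpM2l => //; lra.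
- apply: (@le_trans _ _ (1 + `|y|)); last exact: expR_ge1Dx.
  have := ler_norm (- y); rewrite normrN; lra.
Qed.

Lemma pp_bounds (q c0 be : R) N : 0 < q -> q < 1 -> 0 <= c0 -> c0 < 1 -> be <= c0 ->
  expR (- (`|be| / ((1 - c0) * (1 - q)))) <= pp q be N /\
  pp q be N <= expR (`|be| / (1 - q)).
Proof.
move=> q0 q1 c00 c01 bc.
have hc : 0 < 1 - c0 by rewrite subr_gt0.
have hq : 0 < 1 - q by rewrite subr_gt0.
have yc k : be * q ^+ k <= c0.
  have h0 := exprn_ge0 k (ltW q0).
  have h1 := exprn_ile1 k (ltW q0) (ltW q1).
  nra.
have nk k : `|be * q ^+ k| = `|be| * q ^+ k.
  by rewrite normrM (ger0_norm (exprn_ge0 _ (ltW q0))).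
have G := @geo_le q N (ltW q0) q1.
split.
- apply: (@le_trans _ _ (\prod_(k < N) expR (- (`|be * q ^+ k| / (1 - c0))))).
    rewrite -expR_sumr ler_expR.
    under eq_bigr do rewrite nk mulrAC -mulNr.
    rewrite -mulr_sumr invfM mulrA mulNr lerN2.
    apply: ler_wpM2l; last exact: G.
    by apply: divr_ge0; [exact: normr_ge0|lra].
  apply: ler_prod => k _; have [h1 h2 h3] := @fac_bounds c0 _ c00 c01 (yc k).
  by rewrite h1 andbT ltW ?expR_gt0.
- apply: (@le_trans _ _ (\prod_(k < N) expR `|be * q ^+ k|)).
    apply: ler_prod => k _; have [h1 h2 h3] := @fac_bounds c0 _ c00 c01 (yc k).
    by rewrite h2 andbT ltW.
  rewrite -expR_sumr ler_expR.
  under eq_bigr do rewrite nk.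
  rewrite -mulr_sumr; apply: ler_wpM2l => //; exact: normr_ge0.
Qed.


Lemma pp_cvg (q c0 be : R) : 0 < q -> q < 1 -> 0 <= c0 -> c0 < 1 -> be <= c0 ->
  cvgn (pp q be).
Proof.
move=> q0 q1 c00 c01 bc.
have yc k : be * q ^+ k <= c0.
  have h0 := exprn_ge0 k (ltW q0).
  have h1 := exprn_ile1 k (ltW q0) (ltW q1).
  nra.
have ppS N : pp q be N.+1 = pp q be N * (1 - be * q ^+ N).
  by rewrite /pp big_ord_recr.
have ppge N : 0 <= pp q be N.
  have [h _] := pp_bounds N q0 q1 c00 c01 bc.
  exact: le_trans (ltW (expR_gt0 _)) h.
case/orP: (le_total be 0) => hb.
- apply: cvgP; apply: nondecreasing_cvgn.
    apply/nondecreasing_seqP => N; rewrite ppS.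
    have h0 := exprn_ge0 N (ltW q0).
    have : 1 <= 1 - be * q ^+ N by nra.
    by move=> h1; rewrite -{1}[pp q be N]mulr1; apply: ler_wpM2l.
  exists (expR (`|be| / (1 - q))) => _ [N _ <-].
  by have [_ h] := pp_bounds N q0 q1 c00 c01 bc.
- apply: cvgP; apply: nonincreasing_cvgn.
    apply/nonincreasing_seqP => N; rewrite ppS.
    have h0 := exprn_ge0 N (ltW q0).
    have : 1 - be * q ^+ N <= 1 by nra.
    by move=> h1; rewrite -{2}[pp q be N]mulr1; apply: ler_wpM2l.
  by exists 0 => _ [N _ <-].
Qed.

Lemma qpoch_bounds (q c0 be : R) : 0 < q -> q < 1 -> 0 <= c0 -> c0 < 1 -> be <= c0 ->
  expR (- (`|be| / ((1 - c0) * (1 - q)))) <= qpoch q be /\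
  qpoch q be <= expR (`|be| / (1 - q)).
Proof.
move=> q0 q1 c00 c01 bc.
have C := pp_cvg q0 q1 c00 c01 bc.
split.
- apply: limr_ge => //; apply: nearW => N.
  by have [h _] := pp_bounds N q0 q1 c00 c01 bc.
- apply: limr_le => //; apply: nearW => N.
  by have [_ h] := pp_bounds N q0 q1 c00 c01 bc.
Qed.

Lemma qpoch_gt0 (q c0 be : R) : 0 < q -> q < 1 -> 0 <= c0 -> c0 < 1 -> be <= c0 ->
  0 < qpoch q be.
Proof.
move=> q0 q1 c00 c01 bc.
have [h _] := qpoch_bounds q0 q1 c00 c01 bc.
exact: lt_le_trans (expR_gt0 _) h.
Qed.

Lemma qpoch_shift (q c0 be : R) : 0 < q -> q < 1 -> 0 <= c0 -> c0 < 1 -> be <= c0 ->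
  qpoch q be = (1 - be) * qpoch q (q * be).
Proof.
move=> q0 q1 c00 c01 bc.
have bc' : q * be <= c0.
  have := ltW q0; have := ltW q1; nra.
have C := pp_cvg q0 q1 c00 c01 bc.
have C' := pp_cvg q0 q1 c00 c01 bc'.
have E N : pp q be (N + 1)%N = (1 - be) * pp q (q * be) N.
  rewrite addn1 /pp big_ord_recl expr0 mulr1; congr (_ * _).
  by apply: eq_bigr => i _; rewrite /bump /= exprS mulrA [be * q]mulrC.
have h1 : (fun N => pp q be (N + 1)%N) @ \oo --> qpoch q be.
  by rewrite (cvg_shiftn 1 (pp q be)).
have h2 : (fun N => pp q be (N + 1)%N) @ \oo --> (1 - be) * qpoch q (q * be).
  under eq_fun do rewrite E.
  exact: cvgMl_tmp.
exact: (cvg_unique _ h1 h2).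
Qed.


Lemma expR_cvg1 (u : nat -> R) (K : R) : (u N @[N --> \oo] --> (0:R)) ->
  (expR (K * `|u N|) @[N --> \oo] --> (1:R)).
Proof.
move=> hu.
have h1 : (`|u N| @[N --> \oo] --> (0:R)) by rewrite -(@normr0 _ R); apply: cvg_norm.
have h2 : (K * `|u N| @[N --> \oo] --> (0:R)) by rewrite -(mulr0 K); apply: cvgMl_tmp.
rewrite -expR0; exact: (continuous_cvg _ (@continuous_expR R 0) h2).
Qed.

Lemma qpoch_cvg1 (q c0 : R) (u : nat -> R) : 0 < q -> q < 1 -> 0 <= c0 -> c0 < 1 ->
  (forall N, u N <= c0) -> (u N @[N --> \oo] --> (0:R)) ->
  (qpoch q (u N) @[N --> \oo] --> (1:R)).
Proof.
move=> q0 q1 c00 c01 hc hu.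
apply: (@squeeze_cvgr _ _ _ _ (fun N => expR (- ((1 - c0) * (1 - q))^-1 * `|u N|))
   (fun N => expR ((1 - q)^-1 * `|u N|))).
- apply: nearW => N; have [h1 h2] := qpoch_bounds q0 q1 c00 c01 (hc N).
  have e1 : - ((1 - c0) * (1 - q))^-1 * `|u N| = - (`|u N| / ((1 - c0) * (1 - q))).
    by rewrite mulNr mulrC.
  have e2 : (1 - q)^-1 * `|u N| = `|u N| / (1 - q) by rewrite mulrC.
  by rewrite e1 e2 h1 h2.
- exact: expR_cvg1.
- exact: expR_cvg1.
Qed.

End QP.


Section QPoly.
Variable R : realType.

Definition qn (z : R) (n : nat) : R := \sum_(i < n) z ^+ i.
Definition qD (z : R) (p : {poly R}) : {poly R} :=
  \poly_(i < size p) (qn z i.+1 * p`_i.+1).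

Lemma qn0 z : qn z 0 = 0. Proof. by rewrite /qn big_ord0. Qed.
Lemma qn1 z : qn z 1 = 1. Proof. by rewrite /qn big_ord1 expr0. Qed.

Lemma coef_qD z p i : (qD z p)`_i = qn z i.+1 * p`_i.+1.
Proof.
rewrite coef_poly; case: ltnP => // h.
by rewrite nth_default ?mulr0 // (leq_trans h).
Qed.

Lemma size_qD z p : (size (qD z p) <= size p)%N.
Proof. exact: size_poly. Qed.

Lemma qD_lin z p r c : qD z (p + c *: r) = qD z p + c *: qD z r.
Proof.
by apply/polyP => i; rewrite coefD coefZ !coef_qD coefD coefZ; ring.
Qed.

Lemma horner_qD_mul z p x : p.[x] - p.[z * x] = (1 - z) * x * (qD z p).[x].
Proof.
set n := size p.
rewrite (horner_coef_wide x (size_qD z p)).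
rewrite (horner_coef_wide x (leqnSn n)) (horner_coef_wide (z * x) (leqnSn n)).
rewrite -sumrB big_ord_recl /= !expr0 !mulr1 subrr add0r mulr_sumr.
apply: eq_bigr => i _; rewrite coef_qD /bump /=.
rewrite (_ : (1 - z) * x * (qn z i.+1 * p`_i.+1 * x ^+ i) = ((1 - z) * qn z i.+1) * p`_i.+1 * x ^+ i.+1); last first.
  by rewrite exprS; ring.
rewrite /qn geo_sum exprMn; ring.
Qed.

Lemma Dq_horner z p : z != 1 -> Dq z (fun t => p.[t]) = (fun t => (qD z p).[t]).
Proof.
move=> z1; apply: funext => x; rewrite /Dq; case: eqP => [->|/eqP x0].
  change (fun t => p.[t]) with (horner p); rewrite -derivE.
  by rewrite !horner_coef0 coef_deriv coef_qD qn1 mul1r.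
rewrite horner_qD_mul mulrC mulKf //.
by rewrite mulf_neq0 // subr_eq0 eq_sym.
Qed.


Definition Lp (q : R) (s1 tau p : {poly R}) : {poly R} :=
  s1 * qD q^-1 (qD q p) + tau * qD q p.

Lemma Lp_lin (q : R) (s1 tau p r : {poly R}) c : Lp q s1 tau (p + c *: r) = Lp q s1 tau p + c *: Lp q s1 tau r.
Proof.
rewrite /Lp !qD_lin !mulrDr -!scalerAr scalerDr addrACA //.
Qed.

Definition mu (q : R) (s1 tau : {poly R}) (i : nat) : R :=
  s1`_2 * qn q^-1 i.-1 * qn q i + tau`_1 * qn q i.

Lemma coef_Lp (q : R) (s1 tau p : {poly R}) i : (size s1 <= 3)%N -> (size tau <= 2)%N -> (size p <= i.+1)%N ->
  (Lp q s1 tau p)`_i = mu q s1 tau i * p`_i.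
Proof.
move=> hs ht hp; rewrite /mu.
set a0 := s1`_0; set a1 := s1`_1; set a2 := s1`_2; set t0 := tau`_0; set t1 := tau`_1.
have Es : s1 = a0%:P + a1%:P * 'X + a2%:P * 'X^2.
  apply/polyP => j; rewrite !coefD coefC !coefCM coefX coefXn.
  case: j => [|[|[|j]]] /=; rewrite ?mulr0 ?mulr1 ?addr0 ?add0r //.
  by rewrite nth_default // (leq_trans hs).
have Et : tau = t0%:P + t1%:P * 'X.
  apply/polyP => j; rewrite !coefD coefC !coefCM coefX.
  case: j => [|[|j]] /=; rewrite ?mulr0 ?mulr1 ?addr0 ?add0r //.
  by rewrite nth_default // (leq_trans ht).
have p1 : p`_i.+1 = 0 by rewrite nth_default.
have p2 : p`_i.+2 = 0 by rewrite nth_default // (leq_trans hp).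
rewrite /Lp Es Et !mulrDl -!mulrA !coefD !coefCM !coefXM.
case: i hp p1 p2 => [|[|k]] hp p1 p2 /=; rewrite !coef_qD ?p1 ?p2 ?qn0 ?qn1.
- ring.
- ring.
- ring.
Qed.

Lemma eig_exists (T : {poly R} -> {poly R}) (m : nat -> R) (n : nat) :
  (forall (p r : {poly R}) c, T (p + c *: r) = T p + c *: T r) ->
  (forall (p : {poly R}) i, (size p <= i.+1)%N -> (T p)`_i = m i * p`_i) ->
  (forall i, (i < n)%N -> m i != m n) ->
  exists P : {poly R}, size P = n.+1 /\ T P = m n *: P.
Proof.
move=> lin cp dis.
have resid j : (j <= n)%N -> exists Q : {poly R},
    [/\ forall i, (n < i)%N -> Q`_i = 0, Q`_n = 1 &
        forall i, (n - j <= i)%N -> (T Q - m n *: Q)`_i = 0].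
  elim: j => [_|j IH hj].
    exists 'X^n; split.
    - by move=> i hi; rewrite coefXn; case: eqP => // ei; rewrite ei ltnn in hi.
    - by rewrite coefXn eqxx.
    - move=> i; rewrite subn0 => hi.
      rewrite coefB coefZ cp ?coefXn ?size_polyXn //; case: eqP => [->|_]; rewrite ?mulr0 ?mulr1 subrr //.
  have [Q [Q1 Q2 Q3]] := IH (ltnW hj).
  set e := (n - j.+1)%N.
  have he : (e < n)%N by rewrite /e; lia.
  set c := - (T Q - m n *: Q)`_e / (m e - m n).
  have hmn : m e - m n != 0 by rewrite subr_eq0 dis.
  exists (Q + c *: 'X^e); split.
  - move=> i hi; rewrite coefD coefZ coefXn Q1 //.
    by case: eqP => [ei|_]; rewrite ?mulr0 ?addr0 //; rewrite ei in hi; lia.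
  - by rewrite coefD coefZ coefXn Q2; case: eqP => [en|_]; rewrite ?mulr0 ?addr0 //; lia.
  - move=> i hi.
    have -> : T (Q + c *: 'X^e) - m n *: (Q + c *: 'X^e) =
        (T Q - m n *: Q) + c *: (T 'X^e - m n *: 'X^e).
      rewrite lin; apply/polyP => k; rewrite !(coefD, coefB, coefN, coefZ); ring.
    have cX : (T 'X^e)`_i = m i * 'X^e`_i by apply: cp; rewrite size_polyXn; lia.
    have Q3' := Q3 i.
    rewrite /c !(coefD, coefN, coefZ) cX coefXn in Q3' *.
    case: eqP => [ei|ne].
    + rewrite ei /=; field; exact: hmn.
    + rewrite !mulr0 subr0 mulr0 addr0; apply: Q3'; rewrite /e in hi ne *.
      by move/eqP: ne; lia.
have [Q [Q1 Q2 Q3]] := resid n (leqnn n).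
exists Q; split.
- apply/eqP; rewrite eqn_leq; apply/andP; split.
    by apply/leq_sizeP => i hi; apply: Q1.
  rewrite ltnNge; apply/negP => hs.
  by move: Q2; rewrite nth_default // => /eqP; rewrite eq_sym oner_eq0.
- apply/eqP; rewrite -subr_eq0; apply/eqP/polyP => i; rewrite coef0; apply: Q3.
  by rewrite subnn.
Qed.

End QPoly.


Section Alg.
Variables (R : realType) (q : R) (s1 tau : {poly R}).
Hypotheses (q0 : 0 < q) (q1 : q < 1).

Lemma q_ne0 : q != 0. Proof. by rewrite gt_eqF. Qed.
Lemma q_ne1 : q != 1. Proof. by rewrite lt_eqF. Qed.
Lemma sub1q_ne0 : 1 - q != 0. Proof. by rewrite subr_eq0 eq_sym q_ne1. Qed.
Lemma subq1_ne0 : q - 1 != 0. Proof. by rewrite subr_eq0 q_ne1. Qed.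
Lemma qV_ne1 : q^-1 != 1.
Proof. by rewrite invr_eq1 q_ne1. Qed.

Lemma s1_2E : 2^-1 * (s1^`(2)).[0] = s1`_2.
Proof.
by rewrite horner_coef0 coef_derivn addn0 ffactnn (_ : (2`! = 2)%N) // -mulr_natr; field.
Qed.

Lemma s1_2E' : (s1^`(2)).[0] = 2 * s1`_2.
Proof. by rewrite -s1_2E; field. Qed.

Lemma tau_1E : (tau^`()).[0] = tau`_1.
Proof. by rewrite horner_coef0 coef_deriv mulr1n. Qed.

Lemma qn_closed (z : R) n : z != 1 -> qn z n = (1 - z ^+ n) / (1 - z).
Proof.
move=> z1; have h : 1 - z != 0 by rewrite subr_eq0 eq_sym.
by rewrite -(geo_sum z n) /qn mulrC mulKf.
Qed.

Lemma lambda_mu n : lambda_n q s1 tau n = - mu q s1 tau n.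
Proof.
rewrite /lambda_n /mu s1_2E' tau_1E /qnum.
case: n => [|k].
  by rewrite qn0 expr0z subrr mul0r; ring.
have -> : (Posz k.+1 - 1 = Posz k)%R by rewrite -addn1 PoszD addrK.
rewrite -!exprnP !qn_closed ?qV_ne1 ?q_ne1 //=.
field. by rewrite sub1q_ne0 q_ne0 subq1_ne0.
Qed.

Lemma mu_closed n : tau`_1 = - s1`_2 / (1 - q^-1) ->
  mu q s1 tau n = s1`_2 * q ^+ 2 * (q^-1 ^+ n - 1) / (1 - q) ^+ 2.
Proof.
move=> ht; rewrite /mu ht.
case: n => [|k]; first by rewrite qn0 expr0 subrr; ring.
rewrite /= !qn_closed ?qV_ne1 ?q_ne1 // !exprVn.
have hq := q_ne0.
have hk : q ^+ k != 0 by rewrite expf_neq0.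
rewrite exprS invfM.
field.
by rewrite hq hk sub1q_ne0 subq1_ne0.
Qed.

Lemma mu_inj n i : s1`_2 != 0 -> tau`_1 = - s1`_2 / (1 - q^-1) -> (i < n)%N ->
  mu q s1 tau i != mu q s1 tau n.
Proof.
move=> hk ht hin; rewrite !mu_closed //.
have h1 : 1 - q != 0 by rewrite subr_eq0 eq_sym q_ne1.
apply/negP => /eqP E.
have : q^-1 ^+ i = q^-1 ^+ n.
  set C := s1`_2 * q ^+ 2 / (1 - q) ^+ 2.
  have E2 : C * (q^-1 ^+ i - q^-1 ^+ n) = 0.
    have -> : C * (q^-1 ^+ i - q^-1 ^+ n) =
      s1`_2 * q ^+ 2 * (q^-1 ^+ i - 1) / (1 - q) ^+ 2 -
      s1`_2 * q ^+ 2 * (q^-1 ^+ n - 1) / (1 - q) ^+ 2 by rewrite /C; ring.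
    by rewrite E subrr.
  have C0 : C != 0.
    by rewrite /C !mulf_neq0 ?invr_eq0 ?expf_neq0 ?q_ne0 ?sub1q_ne0.
  move/eqP: E2; rewrite mulf_eq0 (negbTE C0) /= subr_eq0 => /eqP; done.
have qi0 : 0 < q^-1 by rewrite invr_gt0.
move/(ieexprIn qi0 qV_ne1) => ein.
by rewrite ein ltnn in hin.
Qed.

Lemma eigen_exists n : (size s1 <= 3)%N -> (size tau <= 2)%N -> s1`_2 != 0 ->
  tau`_1 = - s1`_2 / (1 - q^-1) ->
  exists P : {poly R}, size P = n.+1 /\ Lp q s1 tau P = mu q s1 tau n *: P.
Proof.
move=> hs ht hk ht1; apply: eig_exists.
- by move=> p r c; exact: Lp_lin.
- by move=> p i hp; exact: coef_Lp.
- by move=> i hi; exact: mu_inj.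
Qed.

Lemma solves_of_Lp n P : Lp q s1 tau P = mu q s1 tau n *: P ->
  solves_qEHT q s1 tau n P.
Proof.
move=> E x.
rewrite (Dq_horner P q_ne1) (Dq_horner (qD q P) qV_ne1).
have := congr1 (fun p => p.[x]) E; rewrite /Lp /= !hornerE lambda_mu => ->.
ring.
Qed.

End Alg.


Section Lat.
Variables (R : realType) (q a b a2 : R).
Hypotheses (q0 : 0 < q) (q1 : q < 1) (ha : a < 0) (hb : 0 < b) (hba2 : b < a2).

Definition c0 : R := Num.max q (b / a2).

Lemma a2_gt0 : 0 < a2. Proof. exact: lt_trans hb hba2. Qed.
Lemma c0_ge0 : 0 <= c0. Proof. by rewrite le_max (ltW q0). Qed.
Lemma c0_lt1 : c0 < 1.
Proof. by rewrite gt_max q1 /= ltr_pdivrMr ?a2_gt0 // mul1r. Qed.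
Lemma q_le_c0 : q <= c0. Proof. by rewrite le_max lexx. Qed.
Lemma ba2_le_c0 : b / a2 <= c0. Proof. by rewrite le_max lexx orbT. Qed.

Lemma lat_args (c : R) j : c = a \/ c = b ->
  [/\ q * (q ^+ j * c) / a <= c0, q * (q ^+ j * c) / b <= c0 & (q ^+ j * c) / a2 <= c0].
Proof.
move=> hc.
have t0 : 0 < q ^+ j by rewrite exprn_gt0.
have t1 : q ^+ j <= 1 by rewrite exprn_ile1 ?ltW.
have qt : q * q ^+ j <= c0.
  apply: le_trans q_le_c0; rewrite -[leRHS]mulr1; apply: ler_wpM2l => //; exact: ltW.
have ia : a^-1 <= 0 by rewrite ltW // invr_lt0.
have ib : 0 <= b^-1 by rewrite ltW // invr_gt0.
have i2 : 0 <= a2^-1 by rewrite ltW // invr_gt0 a2_gt0.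
have ne_a : a != 0 by rewrite lt_eqF.
have ne_b : b != 0 by rewrite gt_eqF.
case: hc => ->; split.
- by rewrite mulrA (mulfK ne_a).
- apply: le_trans c0_ge0; rewrite mulrA; apply: mulr_le0_ge0 => //.
  apply: mulr_ge0_le0; [apply: mulr_ge0; exact: ltW|exact: ltW].
- apply: le_trans c0_ge0; apply: mulr_le0_ge0 => //.
  apply: mulr_ge0_le0; [exact: ltW|exact: ltW].
- apply: le_trans c0_ge0; rewrite mulrA; apply: mulr_ge0_le0 => //.
  apply: mulr_ge0; [apply: mulr_ge0; exact: ltW|exact: ltW].
- by rewrite mulrA (mulfK ne_b).
- apply: le_trans ba2_le_c0; rewrite -mulrA; rewrite -[leRHS]mul1r.
  apply: ler_wpM2r => //; apply: mulr_ge0 => //; exact: ltW.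
Qed.

Lemma lat_ne0 (c : R) j : c = a \/ c = b -> q ^+ j * c != 0.
Proof.
move=> hc; apply: mulf_neq0; first by rewrite expf_neq0 // gt_eqF.
by case: hc => ->; [rewrite (lt_eqF ha) | rewrite (gt_eqF hb)].
Qed.

Lemma qpoch_pos x : x <= c0 -> 0 < qpoch q x.
Proof. move=> h; exact: qpoch_gt0 q0 q1 c0_ge0 c0_lt1 h. Qed.

Lemma rho_pos (c : R) j : c = a \/ c = b -> 0 < rho q a b a2 (q ^+ j * c).
Proof.
move=> hc; have [h1 h2 h3] := lat_args j hc.
by rewrite /rho; apply: divr_gt0; [apply: mulr_gt0|]; exact: qpoch_pos.
Qed.

Lemma rho_shift (c : R) j : c = a \/ c = b ->
  rho q a b a2 (q ^+ j * c) = rho q a b a2 (q * (q ^+ j * c)) *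
    ((1 - q * (q ^+ j * c) / a) * (1 - q * (q ^+ j * c) / b) / (1 - (q ^+ j * c) / a2)).
Proof.
move=> hc.
have [h1 h2 h3] := lat_args j hc.
have [h1' h2' h3'] := lat_args j.+1 hc.
have ex : q ^+ j.+1 * c = q * (q ^+ j * c) by rewrite exprS mulrA.
rewrite ex in h1' h2' h3'.
have s1 := qpoch_shift q0 q1 c0_ge0 c0_lt1 h1.
have s2 := qpoch_shift q0 q1 c0_ge0 c0_lt1 h2.
have s3 := qpoch_shift q0 q1 c0_ge0 c0_lt1 h3.
have C : qpoch q (q * (q ^+ j * c) / a2) != 0 by apply/lt0r_neq0/qpoch_pos.
have D : 1 - (q ^+ j * c) / a2 != 0.
  by rewrite subr_eq0 eq_sym lt_eqF // (le_lt_trans h3 c0_lt1).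
rewrite /rho s1 s2 s3 !mulrA.
rewrite !mulrA in C.
field.
have ne2 : a2 != 0 by rewrite gt_eqF // a2_gt0.
have D' : a2 - q ^+ j * c != 0.
  rewrite subr_eq0 eq_sym lt_eqF //; move: (le_lt_trans h3 c0_lt1).
  by rewrite ltr_pdivrMr ?a2_gt0 // mul1r.
by rewrite C D' ne2 (lt_eqF ha) (gt_eqF hb).
Qed.

Lemma geo_to0 (d : R) : (q ^+ N * d @[N --> \oo] --> (0:R)).
Proof.
rewrite -(mul0r d); apply: cvgMr_tmp; apply: cvg_expr.
by rewrite ger0_norm ?ltW.
Qed.

Lemma qpoch_lat_lim (d : R) : (forall N, q ^+ N * d <= c0) ->
  (qpoch q (q ^+ N * d) @[N --> \oo] --> (1:R)).
Proof.
move=> h.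
exact: (@qpoch_cvg1 R q c0 (fun N => q ^+ N * d) q0 q1 c0_ge0 c0_lt1 h (geo_to0 d)).
Qed.

Lemma rho_lim (c : R) : c = a \/ c = b ->
  (rho q a b a2 (q ^+ N * c) @[N --> \oo] --> (1:R)).
Proof.
move=> hc.
have e1 N : q * (q ^+ N * c) / a = q ^+ N * (q * c / a) by rewrite !mulrA [q * _]mulrC.
have e2 N : q * (q ^+ N * c) / b = q ^+ N * (q * c / b) by rewrite !mulrA [q * _]mulrC.
have e3 N : (q ^+ N * c) / a2 = q ^+ N * (c / a2) by rewrite !mulrA.
have hA : (qpoch q (q ^+ N * (q * c / a)) @[N --> \oo] --> (1:R)).
  by apply: qpoch_lat_lim => N; rewrite -e1; case: (lat_args N hc).
have hB : (qpoch q (q ^+ N * (q * c / b)) @[N --> \oo] --> (1:R)).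
  by apply: qpoch_lat_lim => N; rewrite -e2; case: (lat_args N hc).
have hC : (qpoch q (q ^+ N * (c / a2)) @[N --> \oo] --> (1:R)).
  by apply: qpoch_lat_lim => N; rewrite -e3; case: (lat_args N hc).
have -> : (fun N => rho q a b a2 (q ^+ N * c)) = (fun N =>
   qpoch q (q ^+ N * (q * c / a)) * qpoch q (q ^+ N * (q * c / b)) / qpoch q (q ^+ N * (c / a2))).
  by apply: funext => N; rewrite /rho e1 e2 e3.
rewrite -[X in _ --> X](_ : 1 * 1 * 1^-1 = (1:R)); last by rewrite invr1 !mulr1.
apply: cvgM; [exact: cvgM|exact: cvgV].
Qed.

Lemma hor_lim (p : {poly R}) (c : R) : (p.[q ^+ N * c] @[N --> \oo] --> p.[0]).
Proof. exact: (continuous_cvg _ (@continuous_horner R p 0) (geo_to0 c)). Qed.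

Lemma qpsum_cvg (c : R) (F : R -> R) (l : R) :
  (F (q ^+ N * c) @[N --> \oo] --> l) -> cvgn (qpsum q c F).
Proof.
move=> hF.
set u := fun j => q ^+ j * F (q ^+ j * c).
have E : qpsum q c F = series u.
  by apply: funext => N; rewrite /series /= big_mkord.
rewrite E; apply: normed_cvg.
have hF' : cvgn (fun N => F (q ^+ N * c)) by apply: cvgP hF.
have := cvg_seq_bounded hF'.
move=> [M [_ hM]].
set B := `|M| + 1.
have hMB : M < B by rewrite /B; have := ler_norm M; lra.
have hB N : `|F (q ^+ N * c)| <= B by apply: (hM B hMB).
have B0 : 0 <= B by rewrite /B; have := normr_ge0 M; lra.
apply: (@series_le_cvg _ _ (geometric B q)).
- by move=> n; exact: normr_ge0.
- by move=> n; rewrite /geometric /=; apply: mulr_ge0 => //; apply: exprn_ge0; exact: ltW.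
- move=> n; rewrite /geometric /= /u normrM ger0_norm ?exprn_ge0 ?(ltW q0) // mulrC.
  by apply: ler_wpM2r => //; apply: exprn_ge0; exact: ltW.
- by apply: is_cvg_geometric_series; rewrite ger0_norm ?ltW.
Qed.

End Lat.


Definition Lform (R : realType) (q x s t a0 a1 am : R) : R :=
  s * (((a0 - a1)/((1-q)*x) - (am - a0)/((1-q)*(q^-1*x)))/((1-q^-1)*x))
  + t * ((a0 - a1)/((1-q)*x)).

Lemma step_id (R : realType) (q x f0 f1 fm g0 g1 gm s t r rqsq : R) :
  0 < q -> q < 1 -> x != 0 ->
  rqsq * q = r * (q * (s + (1 - q^-1) * x * t)) ->
  x * (Lform q x s t f0 f1 fm * g0 - f0 * Lform q x s t g0 g1 gm) * r =
  - q ^+ 2 / (1 - q) ^+ 2 * (rqsq * (f0 * g1 - g0 * f1) / (q * x) - r * s * (fm * g0 - gm * f0) / x).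
Proof.
move=> q0 q1 hx hP; rewrite /Lform.
have hq : q != 0 by rewrite gt_eqF.
have h1 : 1 - q != 0 by rewrite subr_eq0 eq_sym lt_eqF.
have h2 : q - 1 != 0 by rewrite subr_eq0 lt_eqF.
have -> : rqsq = r * (q * (s + (1 - q^-1) * x * t)) / q by rewrite -hP mulfK.
field.
by rewrite hx hq h1 h2.
Qed.

Lemma Dq_ne0 (R : realType) (z : R) (f : R -> R) x : x != 0 ->
  Dq z f x = (f x - f (z * x)) / ((1 - z) * x).
Proof. by move=> hx; rewrite /Dq (negbTE hx). Qed.

Section Main.
Variables (R : realType) (q : R) (s1 tau : {poly R}) (a b a2 : R).
Hypotheses (q0 : 0 < q) (q1 : q < 1) (ha : a < 0) (hb : 0 < b) (hba2 : b < a2).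
Hypothesis hs1x : forall x, s1.[x] = 2^-1 * (s1^`(2)).[0] * (x - a) * (x - b).
Hypothesis hs2x : forall x, (sigma2 q s1 tau).[x] = ((sigma2 q s1 tau)^`()).[0] * (x - a2).

Let rh := rho q a b a2.

Lemma pearson (c : R) j : c = a \/ c = b ->
  rh (q * (q ^+ j * c)) * s1.[q * (q ^+ j * c)] * q =
  rh (q ^+ j * c) * (q * (s1.[q ^+ j * c] + (1 - q^-1) * (q ^+ j * c) * tau.[q ^+ j * c])).
Proof.
move=> hc; rewrite /rh.
set k := 2^-1 * (s1^`(2)).[0].
set S := ((sigma2 q s1 tau)^`()).[0].
have sig y : (sigma2 q s1 tau).[y] = q * (s1.[y] + (1 - q^-1) * y * tau.[y]).
  by rewrite /sigma2 !hornerE.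
have ne2 : a2 != 0 by rewrite gt_eqF // (lt_trans hb hba2).
have ne_a : a != 0 by rewrite lt_eqF.
have ne_b : b != 0 by rewrite gt_eqF.
have E0 := hs2x 0; rewrite sig hs1x -/S -/k in E0.
have E1 : S * a2 = - (q * (k * a * b)).
  rewrite (_ : S * a2 = - (S * (0 - a2))); last by ring.
  by rewrite -E0; ring.
have hS : S = - (q * (k * a * b)) / a2 by rewrite -E1 mulfK.
rewrite -sig hs2x -/S (rho_shift q0 q1 ha hb hba2 j hc) hs1x -/k hS.
set x := q ^+ j * c.
have [h1 h2 h3] := lat_args q0 q1 ha hb hba2 j hc.
have D' : a2 - x != 0.
  rewrite subr_eq0 eq_sym lt_eqF //; move: (le_lt_trans h3 (c0_lt1 q1 hb hba2)).
  by rewrite ltr_pdivrMr ?(lt_trans hb hba2) // mul1r.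
field.
by rewrite ne2 ne_a ne_b D'.
Qed.

Definition Bd (f g : R -> R) (y : R) : R :=
  rh y * s1.[y] * (f (q^-1 * y) * g y - g (q^-1 * y) * f y) / y.

Definition eigenf (f : R -> R) (l : R) :=
  forall x, s1.[x] * Dq q^-1 (Dq q f) x + tau.[x] * Dq q f x + l * f x = 0.

Lemma eigen_Lform f l x : x != 0 -> eigenf f l ->
  Lform q x s1.[x] tau.[x] (f x) (f (q * x)) (f (q^-1 * x)) = - (l * f x).
Proof.
move=> hx H.
have hq : q != 0 by rewrite gt_eqF.
have hxi : q^-1 * x != 0 by rewrite mulf_neq0 ?invr_eq0.
have := H x; rewrite !(Dq_ne0 _ _ hx) (Dq_ne0 _ _ hxi) (mulrA q q^-1) mulfV // mul1r.
move=> E; apply/eqP; rewrite -subr_eq0 opprK; apply/eqP; exact: E.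
Qed.

Lemma tele_step (x : R) f g ln lm : x != 0 ->
  rh (q * x) * s1.[q * x] * q = rh x * (q * (s1.[x] + (1 - q^-1) * x * tau.[x])) ->
  eigenf f ln -> eigenf g lm ->
  - q ^+ 2 / (1 - q) ^+ 2 * Bd f g x + (lm - ln) * x * (f x * g x * rh x) =
  - q ^+ 2 / (1 - q) ^+ 2 * Bd f g (q * x).
Proof.
move=> hx hP Hf Hg.
have hq : q != 0 by rewrite gt_eqF.
have St := step_id (f x) (f (q * x)) (f (q^-1 * x)) (g x) (g (q * x)) (g (q^-1 * x)) q0 q1 hx hP.
rewrite (eigen_Lform hx Hf) (eigen_Lform hx Hg) in St.
rewrite /Bd (mulrA q^-1 q) mulVf // mul1r.
rewrite (_ : (lm - ln) * x * (f x * g x * rh x) =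
   x * (- (ln * f x) * g x - f x * - (lm * g x)) * rh x); last by ring.
rewrite St; ring.
Qed.

Lemma tele (c : R) f g ln lm : c = a \/ c = b -> eigenf f ln -> eigenf g lm ->
  forall N, (lm - ln) * c * qpsum q c (fun x => f x * g x * rh x) N =
    - q ^+ 2 / (1 - q) ^+ 2 * Bd f g (q ^+ N * c).
Proof.
move=> hc Hf Hg; elim => [|N IH].
  rewrite /qpsum big_ord0 /Bd expr0 mul1r.
  have -> : s1.[c] = 0 by rewrite hs1x; case: hc => ->; rewrite subrr ?mulr0 ?mul0r.
  ring.
rewrite /qpsum big_ord_recr /= mulrDr.
rewrite [X in X + _](_ : _ = - q ^+ 2 / (1 - q) ^+ 2 * Bd f g (q ^+ N * c)); last exact: IH.
have ex : q ^+ N.+1 * c = q * (q ^+ N * c) by rewrite exprS mulrA.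
rewrite ex -(tele_step (lat_ne0 q0 ha hb N hc) (pearson N hc) Hf Hg).
congr (_ + _); ring.
Qed.

Lemma omega_ex (P Q : {poly R}) : exists w : {poly R},
  forall y, P.[q^-1 * y] * Q.[y] - Q.[q^-1 * y] * P.[y] = w.[y] * y.
Proof.
set W := (P \Po (q^-1 *: 'X)) * Q - (Q \Po (q^-1 *: 'X)) * P.
have hW y : W.[y] = P.[q^-1 * y] * Q.[y] - Q.[q^-1 * y] * P.[y].
  by rewrite /W !hornerE !horner_comp !hornerE.
have r0 : root W 0 by rewrite /root hW mulr0 [Q.[0] * _]mulrC subrr.
case/factor_theorem: r0 => w Hw.
by exists w => y; rewrite -hW Hw !hornerE subr0.
Qed.

Lemma Bd_lim (P Q : {poly R}) (c : R) : c = a \/ c = b ->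
  exists l : R, (Bd (fun t => P.[t]) (fun t => Q.[t]) (q ^+ N * c) @[N --> \oo] --> l).
Proof.
move=> hc; have [w Hw] := omega_ex P Q.
exists (1 * s1.[0] * w.[0]).
have -> : (fun N => Bd (fun t => P.[t]) (fun t => Q.[t]) (q ^+ N * c)) =
    (fun N => rh (q ^+ N * c) * s1.[q ^+ N * c] * w.[q ^+ N * c]).
  apply: funext => N; rewrite /Bd Hw -mulrA mulfK //.
  exact (lat_ne0 q0 ha hb N hc).
apply: cvgM; [apply: cvgM|].
- exact: rho_lim q0 q1 ha hb hba2 c hc.
- exact: hor_lim.
- exact: hor_lim.
Qed.

Lemma F_cvg (P Q : {poly R}) (c : R) : c = a \/ c = b ->
  cvgn (qpsum q c (fun x => P.[x] * Q.[x] * rh x)).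
Proof.
move=> hc; apply: (qpsum_cvg q0 q1 (l := P.[0] * Q.[0] * 1)).
apply: cvgM; [apply: cvgM|].
- exact: hor_lim.
- exact: hor_lim.
- exact: rho_lim q0 q1 ha hb hba2 c hc.
Qed.

Lemma orth (P Q : {poly R}) ln lm :
  eigenf (fun t => P.[t]) ln -> eigenf (fun t => Q.[t]) lm -> lm != ln ->
  qint q a b (fun x => P.[x] * Q.[x] * rh x) = 0.
Proof.
move=> HP HQ hne.
set F := fun x => P.[x] * Q.[x] * rh x.
have key c : c = a \/ c = b -> exists l : R,
    (lm - ln) * c * limn (qpsum q c F) = - q ^+ 2 / (1 - q) ^+ 2 * l /\
    (Bd (fun t => P.[t]) (fun t => Q.[t]) (q ^+ N * c) @[N --> \oo] --> l).
  move=> hc; have [l hl] := Bd_lim P Q hc.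
  exists l; split => //.
  have h1 : ((lm - ln) * c * qpsum q c F N @[N --> \oo] --> (lm - ln) * c * limn (qpsum q c F)).
    by apply: cvgMl_tmp; exact: F_cvg.
  have h2 : ((lm - ln) * c * qpsum q c F N @[N --> \oo] --> - q ^+ 2 / (1 - q) ^+ 2 * l).
    have -> : (fun N => (lm - ln) * c * qpsum q c F N) =
        (fun N => - q ^+ 2 / (1 - q) ^+ 2 * Bd (fun t => P.[t]) (fun t => Q.[t]) (q ^+ N * c)).
      by apply: funext => N; exact: tele.
    by apply: cvgMl_tmp.
  exact: cvg_unique h1 h2.
have [lb [kb hlb]] := key b (or_intror erefl).
have [la [ka hla]] := key a (or_introl erefl).
have [w Hw] := omega_ex P Q.
have hEl : lb = la.
  have hl c : c = a \/ c = b ->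
     (Bd (fun t => P.[t]) (fun t => Q.[t]) (q ^+ N * c) @[N --> \oo] --> 1 * s1.[0] * w.[0]).
    move=> hc.
    have -> : (fun N => Bd (fun t => P.[t]) (fun t => Q.[t]) (q ^+ N * c)) =
        (fun N => rh (q ^+ N * c) * s1.[q ^+ N * c] * w.[q ^+ N * c]).
      apply: funext => N; rewrite /Bd Hw -mulrA mulfK //.
      exact (lat_ne0 q0 ha hb N hc).
    apply: cvgM; [apply: cvgM|].
    - exact: rho_lim q0 q1 ha hb hba2 c hc.
    - exact: hor_lim.
    - exact: hor_lim.
  rewrite (cvg_unique (@Rhausdorff R) hlb (hl b (or_intror erefl))).
  by rewrite (cvg_unique (@Rhausdorff R) hla (hl a (or_introl erefl))).
have : (lm - ln) * qint q a b F = 0.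
  rewrite /qint.
  rewrite (_ : (lm - ln) * ((1 - q) * b * limn (qpsum q b F) + (1 - q) * - a * limn (qpsum q a F))
     = (1 - q) * ((lm - ln) * b * limn (qpsum q b F) - (lm - ln) * a * limn (qpsum q a F))); last by ring.
  by rewrite kb ka hEl subrr mulr0.
move/eqP; rewrite mulf_eq0 subr_eq0 (negbTE hne) /= => /eqP; done.
Qed.

Lemma qint_pos (P : {poly R}) n : size P = n.+1 ->
  0 < qint q a b (fun x => P.[x] * P.[x] * rh x).
Proof.
move=> hs.
set F := fun x => P.[x] * P.[x] * rh x.
have hb' : b = a \/ b = b by right.
have ha' : a = a \/ a = b by left.
have Fnn c j : c = a \/ c = b -> 0 <= q ^+ j * F (q ^+ j * c).
  move=> hc; apply: mulr_ge0; first by apply: exprn_ge0; exact: ltW.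
  apply: mulr_ge0; first by rewrite -expr2 sqr_ge0.
  exact: ltW (rho_pos q0 q1 ha hb hba2 j hc).
have mono c : c = a \/ c = b -> {homo qpsum q c F : i j / (i <= j)%N >-> i <= j}.
  move=> hc; apply/nondecreasing_seqP => N.
  by rewrite /qpsum big_ord_recr /= lerDl; exact: Fnn.
have Lb_ge := nondecreasing_cvgn_le (mono b hb') (F_cvg (P:=P) (Q:=P) hb') n.+1.
have La_ge := nondecreasing_cvgn_le (mono a ha') (F_cvg (P:=P) (Q:=P) ha') 0.
rewrite {1}/qpsum big_ord0 in La_ge.
have q_ne0 : q != 0 by rewrite gt_eqF.
have S_pos : 0 < qpsum q b F n.+1.
  rewrite lt_def; apply/andP; split; last by apply: sumr_ge0 => j _; exact: Fnn.
  apply/negP => /eqP S0.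
  have Z j : (j < n.+1)%N -> P.[q ^+ j * b] = 0.
    move=> hj.
    have := @psumr_eq0P _ _ xpredT (fun i : 'I_n.+1 => q ^+ i * F (q ^+ i * b))
      (fun i _ => Fnn b i hb') S0 (Ordinal hj) isT.
    move/eqP; rewrite mulf_eq0 expf_eq0 (negbTE q_ne0) andbF /= /F.
    rewrite mulf_eq0 => /orP [|/eqP hr]; first by rewrite mulf_eq0 orbb => /eqP.
    by have := rho_pos q0 q1 ha hb hba2 j hb'; rewrite -/rh hr ltxx.
  have P0 : P != 0 by rewrite -size_poly_gt0 hs.
  have U : uniq [seq q ^+ j * b | j <- iota 0 n.+1].
    rewrite map_inj_uniq ?iota_uniq // => i j E.
    have hb0 : b != 0 by rewrite gt_eqF.
    have qne1 : q != 1 by rewrite lt_eqF.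
    apply: (ieexprIn q0 qne1); exact: (mulIf hb0 E).
  have A : all (root P) [seq q ^+ j * b | j <- iota 0 n.+1].
    apply/allP => y /mapP [j]; rewrite mem_iota add0n => /andP[_ hj] ->.
    by rewrite /root Z.
  have := max_poly_roots P0 A U.
  by rewrite size_map size_iota hs ltnn.
rewrite /qint.
have t1 : 0 < (1 - q) * b * limn (qpsum q b F).
  apply: mulr_gt0; first by apply: mulr_gt0 => //; rewrite subr_gt0.
  exact: lt_le_trans S_pos Lb_ge.
have t2 : 0 <= (1 - q) * - a * limn (qpsum q a F).
  apply: mulr_ge0 => //; apply: mulr_ge0; rewrite ?subr_ge0 ?oppr_ge0 ltW //.
lra.
Qed.

End Main.

End Helpers.
Import Helpers.
Unset Implicit Arguments. Set Strict Implicit.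

Theorem theorem5p10 (R : realType) (q : R) (s1 tau : {poly R}) (a1 b1 a2 : R) :
  0 < q < 1 ->
  (size s1 <= 3)%N ->
  (s1^`(2)).[0] != 0 ->
  (forall x, s1.[x] = 2^-1 * (s1^`(2)).[0] * (x - a1) * (x - b1)) ->
  (size tau <= 2)%N ->
  (tau^`()).[0] != 0 ->
  (tau^`()).[0] = - (2^-1 * (s1^`(2)).[0]) / (1 - q^-1) ->
  ((sigma2 q s1 tau)^`()).[0] != 0 ->
  (forall x, (sigma2 q s1 tau).[x] = ((sigma2 q s1 tau)^`()).[0] * (x - a2)) ->
  a1 < 0 -> 0 < b1 -> b1 < a2 ->
  a1 + b1 - (1 - q^-1) * tau.[0] / (2^-1 * (s1^`(2)).[0]) < 0 ->
  exists (P : nat -> {poly R}) (d2 : nat -> R),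
    (forall n, size (P n) = n.+1 /\ solves_qEHT q s1 tau n (P n) /\ d2 n != 0) /\
    (forall m n,
       let f := fun x => (P n).[x] * (P m).[x] * rho q a1 b1 a2 x in
       cvgn (qpsum q b1 f) /\ cvgn (qpsum q a1 f) /\
       qint q a1 b1 f = d2 n * (m == n)%:R).
Proof.
move=> /andP[q0 q1] hs1 hk hs1x htau _ ht1 _ hs2x ha hb hba2 _.
have k2 : s1`_2 != 0.
  by rewrite -s1_2E mulf_neq0 // invr_eq0 pnatr_eq0.
have ht1' : tau`_1 = - s1`_2 / (1 - q^-1) by rewrite -tau_1E -s1_2E.
have EX n := eigen_exists q0 q1 n hs1 htau k2 ht1'.
pose P n := proj1_sig (cid (EX n)).
have HP n : size (P n) = n.+1 /\ Lp q s1 tau (P n) = mu q s1 tau n *: P n.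
  exact: proj2_sig (cid (EX n)).
have Sol n : solves_qEHT q s1 tau n (P n) := solves_of_Lp q0 q1 (HP n).2.
exists P, (fun n => qint q a1 b1 (fun x => (P n).[x] * (P n).[x] * rho q a1 b1 a2 x)).
split.
  move=> n; split; first exact: (HP n).1.
  split; first exact: Sol.
  by rewrite gt_eqF // (qint_pos q0 q1 ha hb hba2 (HP n).1).
move=> m n f.
have hb' : b1 = a1 \/ b1 = b1 by right.
have ha' : a1 = a1 \/ a1 = b1 by left.
split; first exact: (F_cvg q0 q1 ha hb hba2 (P:=P n) (Q:=P m) hb').
split; first exact: (F_cvg q0 q1 ha hb hba2 (P:=P n) (Q:=P m) ha').
case: (eqVneq m n) => [e|ne]; first by rewrite /f e /= mulr1.
rewrite /= mulr0 /f.
apply: (orth q0 q1 ha hb hba2 hs1x hs2x (Sol n) (Sol m)).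
rewrite !lambda_mu // eqr_opp.
case: (ltngtP m n) => h.
- exact: (mu_inj q0 q1 k2 ht1' h).
- by rewrite eq_sym (mu_inj q0 q1 k2 ht1' h).
- by rewrite h eqxx in ne.
Qed.
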